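(* Let $\mathcal{G}$ be an MVPP optional-grabbing pawn game with pawns $[d]$, let $v\in V$ with $v\in V_j$, let $P\subseteq[d]$, and let $j'\in[d]$ with $j'\neq j$. If Player 1 wins from $\langle v,P\cup\{j'\}\rangle$, then Player 1 wins from $\langle v,P\rangle$. Dually, if Player 2 wins from $\langle v,P\setminus\{j'\}\rangle$, then Player 2 wins from $\langle v,P\rangle$. (In words: when a player has the option to grab after the opponent moves the token to $v$, grabbing a pawn other than the one owning $v$ is never better than not grabbing.)
   Context: A pawn game with $d$ pawns consists of a finite directed graph $(V,E)$, a target set $T\subseteq V$, and sets $V_1,\dots,V_d$ partitioning $V$ (MVPP), where Pawn $j$ owns the vertices in $V_j$. A configuration is $\langle v,P\rangle$: token on $v$, Player 1 controls pawns $P\subseteq[d]$, Player 2 controls the rest. At $\langle v,P\rangle$, Player 1 moves the token along an edge iff he controls the pawn owning $v$; otherwise Player 2 moves. Under optional grabbing, after Player $i$ moves, the other player may either leave pawn control unchanged or take one pawn currently controlled by Player $i$. Player 1 wins a play iff it visits $T$, otherwise Player 2 wins; winning from a configuration means having a strategy that wins against all opponent strategies. *)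

(* Defs.v *)
From mathcomp Require Import all_boot.
Set Implicit Arguments. Unset Strict Implicit. Unset Printing Implicit Defensive.

Section PawnGame.
(* Pawns are 'I_d; [own x] is the unique pawn j with x \in V_j (MVPP). *)
Variables (d : nat) (V : finType) (E : rel V) (own : V -> 'I_d) (T : {set V}).

(* configuration <v, P> : token on v, Player 1 controls the pawns in P *)
Definition config := (V * {set 'I_d})%type.

Definition p1_moves (c : config) : bool := own c.1 \in c.2.

(* A strategy (for either player) maps the history c_0 ... c_i (current
   configuration last) to a successor vertex when the player moves, and,
   when the opponent moved the token to u, to the new set of pawns
   controlled by Player 1 (the grabbing decision). *)
Record strategy := Strategy {
  smove : seq config -> V;
  sgrab : seq config -> V -> {set 'I_d} }.

Definition grab2_ok (P P' : {set 'I_d}) : Prop :=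
  P' = P \/ exists2 j, j \in P & P' = P :\ j.
Definition grab1_ok (P P' : {set 'I_d}) : Prop :=
  P' = P \/ exists2 j, j \notin P & P' = j |: P.

Definition legal1 (s : strategy) : Prop :=
  (forall x h, let c := last x h in p1_moves c -> E c.1 (smove s (x :: h))) /\
  (forall x h u, let c := last x h in ~~ p1_moves c -> E c.1 u ->
     grab1_ok c.2 (sgrab s (x :: h) u)).

Definition legal2 (s : strategy) : Prop :=
  (forall x h, let c := last x h in ~~ p1_moves c -> E c.1 (smove s (x :: h))) /\
  (forall x h u, let c := last x h in p1_moves c -> E c.1 u ->
     grab2_ok c.2 (sgrab s (x :: h) u)).

Definition next (s1 s2 : strategy) (c0 : config) (h : seq config) : config :=
  let c := last c0 h in
  if p1_moves c then let u := smove s1 h in (u, sgrab s2 h u)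
  else let u := smove s2 h in (u, sgrab s1 h u).

(* history of the first n+1 configurations of the outcome play *)
Fixpoint hist (s1 s2 : strategy) (c0 : config) (n : nat) : seq config :=
  match n with
  | 0 => [:: c0]
  | n'.+1 => let h := hist s1 s2 c0 n' in rcons h (next s1 s2 c0 h)
  end.

Definition play (s1 s2 : strategy) (c0 : config) (n : nat) : config :=
  last c0 (hist s1 s2 c0 n).

Definition wins1 (c0 : config) : Prop :=
  exists2 s1, legal1 s1 &
    forall s2, legal2 s2 -> exists n, (play s1 s2 c0 n).1 \in T.

Definition wins2 (c0 : config) : Prop :=
  exists2 s2, legal2 s2 &
    forall s1, legal1 s1 -> forall n, (play s1 s2 c0 n).1 \notin T.

End PawnGame.

(* Main.v *)
Require Import Defs.
From mathcomp Require Import all_boot.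
Set Implicit Arguments. Unset Strict Implicit. Unset Printing Implicit Defensive.

Section Sets.
Variable (d : nat). Local Notation I := ('I_d).
Implicit Types (A B R Q D : {set I}).

Lemma card_le1_eq A a b : #|A| <= 1 -> a \in A -> b \in A -> a = b.
Proof.
move=> c1 ha hb; apply/eqP; apply: contraLR c1 => nab.
rewrite -ltnNge (cardsD1 a) ha add1n ltnS card_gt0; apply/set0Pn; exists b.
by rewrite !inE hb eq_sym nab.
Qed.

Definition vg (V : finType) (own : V -> I) (Qv R R' : {set I}) (y : V) :=
  if own y \in Qv :\: R then Qv :\ own y else Qv :\: (R :\: R').

Definition grab2b A A' := (A' == A) || [exists j, (j \in A) && (A' == A :\ j)].

Lemma grab2bP A A' : grab2b A A' -> grab2_ok A A'.
Proof.
case/orP=> [/eqP->|/existsP[j /andP[hj /eqP->]]]; [by left|by right; exists j].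
Qed.

Lemma step1 (V : finType) (own : V -> I) (Qv R R' : {set I}) (y : V) :
  R \subset Qv -> #|Qv :\: R| <= 1 -> grab2_ok R R' ->
  let Qv' := vg own Qv R R' y in
  [/\ grab2b Qv Qv', R' \subset Qv', #|Qv' :\: R'| <= 1 & own y \notin Qv' :\: R'].
Proof.
move=> sRQ c1 g /=; rewrite /vg.
case: ifP => hy.
  have eQ : Qv :\ own y = R.
    apply/setP=> z; rewrite !inE.
    case: (eqVneq z (own y)) => [->|nz] /=.
      by move: hy; rewrite !inE => /andP[/negbTE->].
    case hzR: (z \in R); first by rewrite (subsetP sRQ _ hzR).
    apply/negP=> hzQ.
    have hz : z \in Qv :\: R by rewrite !inE hzR hzQ.
    by move: nz; rewrite (card_le1_eq c1 hz hy) eqxx.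
  have hyR : own y \notin R by move: hy; rewrite !inE => /andP[].
  rewrite eQ; split.
  - apply/orP; right; apply/existsP; exists (own y).
    by rewrite eQ eqxx andbT; move: hy; rewrite !inE => /andP[].
  - by case: g => [->|[k hk ->]]; [exact: subxx | apply/subsetP=> z; rewrite !inE => /andP[]].
  - case: g => [->|[k hk ->]]; first by rewrite setDv cards0.
    have -> : R :\: (R :\ k) = [set k].
      apply/setP=> z; rewrite !inE; case: (eqVneq z k) => [->|nzk] /=; [by rewrite ?eqxx hk | by rewrite andNb].
    by rewrite cards1.
  - by rewrite inE negb_and hyR orbT.
case: g => [->|[k hk ->]].
  rewrite setDv setD0; split => //; first by rewrite /grab2b eqxx.
  by rewrite hy.
have -> : R :\: (R :\ k) = [set k].
  by apply/setP=> z; rewrite !inE; case: (eqVneq z k) => [->|nzk] /=; [by rewrite ?eqxx hk | by rewrite andNb].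
have -> : Qv :\: [set k] :\: (R :\ k) = Qv :\: R.
  apply/setP=> z; rewrite !inE; case: (eqVneq z k) => [->|] /=; last by [].
  by rewrite hk.
split => //; last by rewrite hy.
- apply/orP; right; apply/existsP; exists k; rewrite eqxx andbT.
  exact: (subsetP sRQ).
- by apply/subsetP=> z; rewrite !inE => /andP[-> hz]; rewrite (subsetP sRQ).
Qed.

Definition rg (V : finType) (own : V -> I) (R Qv' : {set I}) (y : V) :=
  if own y \in Qv' :\: R then own y |: R
  else if [pick z in Qv' :\: R] is Some z then z |: R else R.

Lemma step2_aux (Qv' R : {set I}) z : R \subset Qv' -> z \in Qv' :\: R ->
  [/\ z |: R \subset Qv', Qv' :\: (z |: R) = (Qv' :\: R) :\ z &
      #|Qv' :\: R| = (#|Qv' :\: (z |: R)|).+1].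
Proof.
move=> sRQ hz.
have e : Qv' :\: (z |: R) = (Qv' :\: R) :\ z.
  by apply/setP=> x; rewrite !inE negb_or; case: (x == z); rewrite ?andbF.
split => //.
- apply/subsetP=> x; rewrite !inE => /orP[/eqP->|/(subsetP sRQ)//].
  by move: hz; rewrite inE => /andP[].
- by rewrite e (cardsD1 z (Qv' :\: R)) hz.
Qed.

Lemma step2 (V : finType) (own : V -> I) (Qv Qv' R : {set I}) (y : V) :
  R \subset Qv -> #|Qv :\: R| <= 1 -> grab1_ok Qv Qv' ->
  let R' := rg own R Qv' y in
  [/\ grab1_ok R R', R' \subset Qv', #|Qv' :\: R'| <= 1 & own y \notin Qv' :\: R'].
Proof.
move=> sRQ c1 g /=.
have [sRQ' c2] : R \subset Qv' /\ #|Qv' :\: R| <= 2.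
  case: g => [->|[k hk ->]]; first by split => //; apply: leq_trans c1 _.
  split; first by apply: subset_trans sRQ _; apply/subsetP=> x; rewrite !inE => ->; rewrite orbT.
  have -> : (k |: Qv) :\: R = k |: (Qv :\: R).
    apply/setP=> x; rewrite !inE; case: (eqVneq x k) => [->|] //=.
    by rewrite (contraNN (fun h => subsetP sRQ k h) hk).
  by rewrite cardsU1 -[2]/(1+1); apply: leq_add => //; exact: leq_b1.
have gok : forall z, z \in Qv' :\: R -> grab1_ok R (z |: R).
  by move=> z; rewrite inE => /andP[hz _]; right; exists z.
rewrite /rg; case: ifP => hy.
  have [s e c] := step2_aux sRQ' hy; split => //; first exact: gok.
    by rewrite -ltnS -c.
  by rewrite e !inE eqxx.
case: pickP => [z hz|none].
  have [s e c] := step2_aux sRQ' hz; split => //; first exact: gok.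
    by rewrite -ltnS -c.
  by rewrite e inE hy andbF.
have -> : Qv' :\: R = set0 by apply/setP=> x; rewrite none inE.
by split => //; [left | rewrite cards0 | rewrite inE].
Qed.

End Sets.

Lemma rg_ok (d : nat) (V : finType) (own : V -> 'I_d) (R Qv' : {set 'I_d}) (y : V) :
  grab1_ok R (rg own R Qv' y).
Proof.
rewrite /rg; case: ifP => [h|_].
  by right; exists (own y) => //; move: h; rewrite inE => /andP[].
case: pickP => [z hz|_]; last by left.
by right; exists z => //; move: hz; rewrite inE => /andP[].
Qed.

Section Coupling.
Variables (d : nat) (V : finType) (E : rel V) (own : V -> 'I_d).
Hypothesis ndE : forall x, exists y, E x y.
Variables (v : V) (R Q : {set 'I_d}).
Local Notation config := (config d V).
Local Notation strategy := (strategy d V).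
Definition c0r : config := (v, R).
Definition c0v : config := (v, Q).
Definition lastc (h : seq config) := last c0r h.
Definition dflt (x : V) := odflt x [pick y | E x y].
Lemma dfltP x : E x (dflt x).
Proof. by rewrite /dflt; case: pickP => // none; have [y] := ndE x; rewrite none. Qed.

Variable s1 : strategy.
Definition vstep (acc : seq config) (c c' : config) : config :=
  if p1_moves own c then (c'.1, vg own (lastc acc).2 c.2 c'.2 c'.1)
  else (c'.1, sgrab s1 acc c'.1).
Fixpoint vh acc c rest := if rest is c' :: rest' then vh (rcons acc (vstep acc c c')) c' rest' else acc.
Definition vhist (h : seq config) := if h is x :: t then vh [:: (x.1, Q)] x t else [::].

Lemma vh_rcons rest acc c c' :
  vh acc c (rcons rest c') = rcons (vh acc c rest) (vstep (vh acc c rest) (last c rest) c').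
Proof. by elim: rest acc c => [|c1 r IH] acc c //=. Qed.

Lemma vhist_rcons x t c' :
  vhist (rcons (x :: t) c') = rcons (vhist (x :: t)) (vstep (vhist (x :: t)) (last x t) c').
Proof. exact: vh_rcons. Qed.

Definition s1' : strategy := Strategy
  (fun h => let y := smove s1 (vhist h) in if E (lastc h).1 y then y else dflt (lastc h).1)
  (fun h u => rg own (lastc h).2 (sgrab s1 (vhist h) u) u).

Lemma legal_s1' : legal1 E own s1'.
Proof.
split=> [x h /= _ | x h u /= _ _]; last exact: rg_ok.
by case: ifP => // _; exact: dfltP.
Qed.

Variable s2 : strategy.
Definition s2v : strategy := Strategy
  (fun hv => let hr := hist own s1' s2 c0r (size hv).-1 in let y := smove s2 hr in
     if (hv == vhist hr) && E (lastc hv).1 y then y else dflt (lastc hv).1)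
  (fun hv y => let hr := hist own s1' s2 c0r (size hv).-1 in
     let g := vg own (lastc hv).2 (lastc hr).2 (sgrab s2 hr y) y in
     if (hv == vhist hr) && grab2b (lastc hv).2 g then g else (lastc hv).2).

Lemma legal_s2v : legal2 E own s2v.
Proof.
split=> [x h /= _ | x h u /= _ _].
  by case: ifP => [/andP[_ ->]|_] //; exact: dfltP.
by case: ifP => [/andP[_ /grab2bP]|_] //; left.
Qed.

Lemma hist_cons (a b : strategy) c n : exists t, hist own a b c n = c :: t.
Proof.
elim: n => [|n [t IH]] /=; first by exists [::].
by rewrite IH; eexists.
Qed.

Lemma size_hist (a b : strategy) c n : size (hist own a b c n) = n.+1.
Proof. by elim: n => //= n IH; rewrite size_rcons IH. Qed.

Definition Inv (cr cv : config) :=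
  [/\ cr.1 = cv.1, cr.2 \subset cv.2, #|cv.2 :\: cr.2| <= 1 & own cr.1 \notin cv.2 :\: cr.2].

Hypothesis L1 : legal1 E own s1.
Hypothesis L2 : legal2 E own s2.
Hypothesis Inv0 : Inv c0r c0v.

Lemma coupled n :
  vhist (hist own s1' s2 c0r n) = hist own s1 s2v c0v n /\
  Inv (lastc (hist own s1' s2 c0r n)) (lastc (hist own s1 s2v c0v n)).
Proof.
elim: n => [|n [IH1 IH2]]; first by [].
have [tr Hr] := hist_cons s1' s2 c0r n.
have [tv Hv] := hist_cons s1 s2v c0v n.
set hr := hist own s1' s2 c0r n in IH1 IH2 Hr *.
set hv := hist own s1 s2v c0v n in IH1 IH2 Hv *.
have lr : last c0r tr = lastc hr by rewrite Hr.
have lv : last c0v tv = lastc hv by rewrite Hv.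
have lv' : last c0v hv = lastc hv by rewrite Hv.
rewrite /= -/hr -/hv /Defs.next -/(lastc hr) lv'.
rewrite {1}Hr vhist_rcons -Hr lr IH1.
rewrite /lastc !last_rcons -/(lastc hr) -/(lastc hv).
move: IH2; case Hcr: (lastc hr) => [u Rc]; case Hcv: (lastc hv) => [u' Qc].
rewrite Hcr in lr; rewrite Hcv in lv lv'.
case=> /= eu sRQ c1 nin; subst u'.
have hsz : (size hv).-1 = n by rewrite size_hist.
case: ifP => p1r.
  have p1v : p1_moves own (u, Qc).
    by move: p1r; rewrite /p1_moves /= => /(subsetP sRQ).
  rewrite p1v /=.
  have Ey : E u (smove s1 hv).
    by have := L1.1 c0v tv; rewrite lv Hv; apply.
  rewrite IH1 Hcr Hcv /= Ey.
  set y := smove s1 hv.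
  have g2 : grab2_ok Rc (sgrab s2 hr y).
    by have := L2.2 c0r tr y; rewrite lr Hr; apply.
  have [gb s' c' n'] := step1 own y sRQ c1 g2.
  rewrite hsz -/hr IH1 eqxx Hcr /= gb /vstep /= p1r Hcv /=.
  by split.
have p1v : p1_moves own (u, Qc) = false.
  apply/negbTE; apply: contra nin ; rewrite /p1_moves /= => hQ; rewrite inE hQ andbT.
  by rewrite /p1_moves /= in p1r; rewrite p1r.
rewrite p1v /=.
set y := smove s2 hr.
have Ey : E u y by have := L2.1 c0r tr; rewrite lr -Hr /= /p1_moves; rewrite /p1_moves in p1r; rewrite p1r; apply.
rewrite hsz -/hr -/y IH1 eqxx Hcv /= Ey Hcr /vstep p1r /=.
have g1 : grab1_ok Qc (sgrab s1 hv y).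
  by have := L1.2 c0v tv y; rewrite lv Hv /= p1v; apply.
have [_ s' c' n'] := step2 own y sRQ c1 g1.
by split.
Qed.

End Coupling.

Lemma coupling (d : nat) (V : finType) (E : rel V) (own : V -> 'I_d)
  (ndE : forall x, exists y, E x y) (v : V) (R Q : {set 'I_d}) s1 :
  R \subset Q -> #|Q :\: R| <= 1 -> own v \notin Q :\: R -> legal1 E own s1 ->
  exists2 s1', legal1 E own s1' & forall s2, legal2 E own s2 ->
    exists2 s2v, legal2 E own s2v &
      forall n, (play own s1' s2 (v, R) n).1 = (play own s1 s2v (v, Q) n).1.
Proof.
move=> sRQ c1 nin L1; exists (s1' E own v R Q s1); first exact: legal_s1'.
move=> s2 L2; exists (s2v E own v R Q s1 s2); first exact: legal_s2v.
move=> n; have I0 : Inv own (c0r v R) (c0v v Q) by split.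
have [_ [e _ _ _]] := coupled L1 L2 I0 n.
rewrite /play; move: e; rewrite /lastc.
by have [t ->] := hist_cons own s1 (s2v E own v R Q s1 s2) (c0v v Q) n.
Qed.

Section Swap.
Variables (d : nat) (V : finType) (E : rel V) (own : V -> 'I_d).
Local Notation config := (config d V).
Local Notation strategy := (strategy d V).
Definition cswap (c : config) : config := (c.1, ~: c.2).
Lemma cswapK : involutive cswap.
Proof. by case=> u P; rewrite /cswap /= setCK. Qed.
Definition swap (s : strategy) : strategy :=
  Strategy (fun h => smove s (map cswap h)) (fun h u => ~: sgrab s (map cswap h) u).

Lemma p1_swap c : p1_moves own (cswap c) = ~~ p1_moves own c.
Proof. by rewrite /p1_moves /= inE. Qed.

Lemma legal_swap12 s : legal1 E own s -> legal2 E own (swap s).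
Proof.
case=> Lm Lg; split=> [x h /= p | x h u /= p e].
  have := Lm (cswap x) (map cswap h); cbv zeta; rewrite last_map p1_swap.
  by move/(_ p).
have := Lg (cswap x) (map cswap h) u; cbv zeta; rewrite last_map p1_swap negbK p /=.
case/(_ isT e) => [->|[j hj ->]]; first by left; rewrite setCK.
right; exists j; first by move: hj; rewrite inE negbK.
by apply/setP=> z; rewrite !inE negb_or negbK.
Qed.

Lemma legal_swap21 s : legal2 E own s -> legal1 E own (swap s).
Proof.
case=> Lm Lg; split=> [x h /= p | x h u /= p e].
  have := Lm (cswap x) (map cswap h); cbv zeta; rewrite last_map p1_swap p.
  by apply.
have := Lg (cswap x) (map cswap h) u; cbv zeta; rewrite last_map p1_swap p /=.
case/(_ isT e) => [->|[j hj ->]]; first by left; rewrite setCK.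
right; exists j; first by move: hj; rewrite inE.
by apply/setP=> z; rewrite !inE negb_and !negbK.
Qed.

Lemma hist_swap s1 s2 c0 n :
  hist own (swap s2) (swap s1) (cswap c0) n = map cswap (hist own s1 s2 c0 n).
Proof.
elim: n => //= n IH; rewrite IH map_rcons; congr rcons.
rewrite /Defs.next last_map p1_swap /= (mapK cswapK).
by case: (p1_moves own (last c0 (hist own s1 s2 c0 n))).
Qed.

Lemma play_swap s1 s2 c0 n :
  (play own s1 s2 c0 n).1 = (play own (swap s2) (swap s1) (cswap c0) n).1.
Proof. by rewrite /play hist_swap last_map. Qed.

Lemma hist_ext a a' b b' c n :
  smove a =1 smove a' -> (forall h u, sgrab a h u = sgrab a' h u) ->
  smove b =1 smove b' -> (forall h u, sgrab b h u = sgrab b' h u) ->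
  hist own a b c n = hist own a' b' c n.
Proof.
move=> ma ga mb gb; elim: n => //= n ->.
by rewrite /Defs.next ma ga mb gb.
Qed.

Lemma play_ssl a b c n :
  play own (swap (swap a)) b c n = play own a b c n.
Proof.
rewrite /play (@hist_ext _ a _ b) // => [h|h u] /=;
  by rewrite ?(mapK cswapK) ?setCK.
Qed.
Lemma play_ssr a b c n :
  play own a (swap (swap b)) c n = play own a b c n.
Proof.
rewrite /play (@hist_ext _ a _ b) // => [h|h u] /=;
  by rewrite ?(mapK cswapK) ?setCK.
Qed.
End Swap.

Theorem corollary6 (d : nat) (V : finType) (E : rel V) (own : V -> 'I_d)
    (T : {set V}) (no_dead_end : forall x : V, exists y, E x y)
    (v : V) (P : {set 'I_d}) (j' : 'I_d) :
  j' != own v ->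
  (wins1 E own T (v, j' |: P) -> wins1 E own T (v, P)) /\
  (wins2 E own T (v, P :\ j') -> wins2 E own T (v, P)).
Proof.
move=> nj; split.
  case=> s1 L1 W.
  have onlyj : forall z, z \in (j' |: P) :\: P -> z = j'.
    by move=> z; rewrite !inE => /andP[/negbTE -> /orP[/eqP|]].
  have [|||s1' L1' K] := coupling no_dead_end (R := P) (Q := j' |: P) (v := v) (own := own) _ _ _ L1.
  - by apply/subsetP=> z hz; rewrite inE hz orbT.
  - rewrite leqNgt; apply/negP=> /card_gt1P [a [b [ha hb nab]]].
    by move: nab; rewrite (onlyj _ ha) (onlyj _ hb) eqxx.
  - by apply/negP=> /onlyj e; move: nj; rewrite e eqxx.
  exists s1' => // s2 L2.
  have [s2v L2v eq] := K s2 L2.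
  have [n Hn] := W s2v L2v.
  by exists n; rewrite eq.
case=> s2 L2 W.
have onlyj : forall z, z \in ~: (P :\ j') :\: ~: P -> z = j'.
  move=> z; rewrite !inE negbK negb_and negbK => /andP[hP /orP[/eqP //|]].
  by rewrite hP.
have [|||s1'' L1'' K] := coupling no_dead_end (R := ~: P) (Q := ~: (P :\ j')) (v := v) (own := own) _ _ _ (legal_swap21 L2).
- by apply/subsetP=> z; rewrite !inE negb_and => ->; rewrite orbT.
- rewrite leqNgt; apply/negP=> /card_gt1P [a [b [ha hb nab]]].
  by move: nab; rewrite (onlyj _ ha) (onlyj _ hb) eqxx.
- by apply/negP=> /onlyj e; move: nj; rewrite e eqxx.
exists (swap s1''); first exact: legal_swap12.
move=> s1 L1 n.
rewrite play_swap play_ssl.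
have [tv Ltv eq] := K (swap s1) (legal_swap12 L1).
rewrite [cswap _]/cswap /= eq.
have := W (swap tv) (legal_swap21 Ltv) n.
by rewrite play_swap play_ssr.
Qed.
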